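(* Under the standing setup, assume that $f$ is bounded, i.e. $\sup_{q\in\mathcal P}\|f_q\|_\infty<\infty$ (which implies $\sup_{q\in\mathcal P}\|q\|<\infty$). Let $\Sigma=(\Sigma(t))_{t\ge0}$ be the Nisio semigroup of $(\mathcal P,0)$, i.e. the Nisio semigroup constructed with $f_q$ replaced by $0$ for all $q\in\mathcal P$. Then $s\mapsto\Sigma(s)v$ is continuous for every $v\in\mathbb R^d$, and for all $u_0\in\mathbb R^d$ and $t\ge0$, $\mathscr S(t)u_0-u_0\le\int_0^t\Sigma(s)\mathcal Qu_0\,ds$ (componentwise).
   Context: Standing setup: $d\in\mathbb N$; vectors in $\mathbb R^d$ with $\|u\|_\infty=\max_i|u_i|$; $\|a\|$ is the operator norm of $a\in\mathbb R^{d\times d}$ w.r.t. $\|\cdot\|_\infty$; inequalities, integrals and suprema of vectors are componentwise; reals are identified with constant vectors. A $Q$-matrix is $q\in\mathbb R^{d\times d}$ with $q_{ii}\le0$, $q_{ij}\ge0$ ($i\ne j$), $\sum_jq_{ij}=0$. Let $\mathcal P$ be a set of $Q$-matrices and $f=(f_q)_{q\in\mathcal P}\subset\mathbb R^d$ with $\sup_{q\in\mathcal P}f_q=f_{q_0}=0$ for some $q_0\in\mathcal P$, such that $\mathcal Qu:=\sup_{q\in\mathcal P}(qu+f_q)$ is finite for every $u\in\mathbb R^d$. For $q\in\mathcal P$, $t\ge0$: $S_q(t)u_0:=e^{tq}u_0+\int_0^te^{sq}f_q\,ds$. For $h\ge0$: $\mathcal E_hu_0:=\sup_{q\in\mathcal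 P}S_q(h)u_0$. $P$ is the set of finite subsets $\pi\subset[0,\infty)$ with $0\in\pi$; $P_t:=\{\pi\in P:\max\pi=t\}$. For $\pi=\{t_0,\dots,t_m\}$ with $0=t_0<\dots<t_m$, $m\ge1$, $\mathcal E_\pi:=\mathcal E_{t_1-t_0}\circ\cdots\circ\mathcal E_{t_m-t_{m-1}}$, and $\mathcal E_{\{0\}}:=\mathcal E_0$. The Nisio semigroup of $(\mathcal P,f)$ is $\mathscr S(t)u_0:=\sup_{\pi\in P_t}\mathcal E_\pi u_0$. *)

(* Defs.v *)
From Stdlib Require Import Reals Lra List Factorial ClassicalEpsilon.
Import ListNotations.
Open Scope R_scope.

(* Vectors in R^d are represented as nat -> R (only indices i < d matter),
   d x d matrices as nat -> nat -> R (only indices i, j < d matter). *)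
Definition vec := nat -> R.
Definition mat := nat -> nat -> R.

Fixpoint rsum (n : nat) (g : nat -> R) : R :=
  match n with O => 0 | S m => rsum m g + g m end.

Definition mv (d : nat) (q : mat) (u : vec) : vec :=
  fun i => rsum d (fun j => q i j * u j).

Fixpoint mpowv (d : nat) (q : mat) (k : nat) (u : vec) : vec :=
  match k with O => u | S k' => mv d q (mpowv d q k' u) end.

Definition Qmatrix (d : nat) (q : mat) : Prop :=
  (forall i, (i < d)%nat -> q i i <= 0) /\
  (forall i j, (i < d)%nat -> (j < d)%nat -> i <> j -> 0 <= q i j) /\
  (forall i, (i < d)%nat -> rsum d (q i) = 0).

Definition rlim (u : nat -> R) : R :=
  epsilon (inhabits 0) (fun l => Un_cv u l).

Definition mexpv (d : nat) (t : R) (q : mat) (u : vec) : vec :=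
  fun i => rlim (fun N => sum_f_R0 (fun k => t ^ k / INR (fact k) * mpowv d q k u i) N).

Definition rint (g : R -> R) (a b : R) : R :=
  epsilon (inhabits 0) (fun I => exists pr : Riemann_integrable g a b, RiemannInt pr = I).

Definition vsup (F : vec -> Prop) : vec :=
  fun i => epsilon (inhabits 0) (fun m => is_lub (fun x => exists v, F v /\ x = v i) m).

Definition Sq (d : nat) (q : mat) (fq : vec) (t : R) (u0 : vec) : vec :=
  fun i => mexpv d t q u0 i + rint (fun s => mexpv d s q fq i) 0 t.

Definition Eh (d : nat) (P : mat -> Prop) (f : mat -> vec) (h : R) (u0 : vec) : vec :=
  vsup (fun v => exists q, P q /\ v = Sq d q (f q) h u0).

Definition Qop (d : nat) (P : mat -> Prop) (f : mat -> vec) (u : vec) : vec :=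
  vsup (fun v => exists q, P q /\ v = (fun i => mv d q u i + f q i)).

(* A partition pi = {0 = t_0 < t_1 < ... < t_m} is represented by the list
   [t_1; ...; t_m] (empty list <-> pi = {0}). *)
Fixpoint incr (prev : R) (l : list R) : Prop :=
  match l with [] => True | x :: r => prev < x /\ incr x r end.

Definition is_part (t : R) (l : list R) : Prop := incr 0 l /\ last l 0 = t.

Fixpoint Epi_aux (d : nat) (P : mat -> Prop) (f : mat -> vec)
    (prev : R) (l : list R) (u : vec) : vec :=
  match l with
  | [] => u
  | x :: r => Eh d P f (x - prev) (Epi_aux d P f x r u)
  end.

Definition Epi (d : nat) (P : mat -> Prop) (f : mat -> vec) (l : list R) (u : vec) : vec :=
  match l with
  | [] => Eh d P f 0 u
  | _ => Epi_aux d P f 0 l u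
  end.

Definition Nisio (d : nat) (P : mat -> Prop) (f : mat -> vec) (t : R) (u0 : vec) : vec :=
  vsup (fun v => exists l, is_part t l /\ v = Epi d P f l u0).

(* Main.v *)
Require Import Defs.
From Stdlib Require Import Reals Lra Lia List Factorial ClassicalEpsilon Classical.
From Coquelicot Require Import Coquelicot.
Import ListNotations.
Open Scope R_scope.

Lemma rsum_ext n g h : (forall j, (j < n)%nat -> g j = h j) -> rsum n g = rsum n h.
Proof. induction n; simpl; intros H; auto. rewrite IHn by (intros; apply H; lia). rewrite H by lia; auto. Qed.

Lemma rsum_plus n g h : rsum n (fun j => g j + h j) = rsum n g + rsum n h.
Proof. induction n; simpl; [lra|rewrite IHn; lra]. Qed.

Lemma rsum_scal n c g : rsum n (fun j => c * g j) = c * rsum n g.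
Proof. induction n; simpl; [lra|rewrite IHn; lra]. Qed.

Lemma rsum_zero n : rsum n (fun _ => 0) = 0.
Proof. induction n; simpl; [lra|rewrite IHn; lra]. Qed.

Lemma rsum_le n g h : (forall j, (j < n)%nat -> g j <= h j) -> rsum n g <= rsum n h.
Proof. induction n; simpl; intros H; [lra|]. assert (g n <= h n) by (apply H; lia).
  assert (rsum n g <= rsum n h) by (apply IHn; intros; apply H; lia). lra. Qed.

Lemma rsum_nonneg n g : (forall j, (j < n)%nat -> 0 <= g j) -> 0 <= rsum n g.
Proof. intros H. rewrite <- (rsum_zero n). apply rsum_le; auto. Qed.

Lemma rsum_opp n g : rsum n (fun j => - g j) = - rsum n g.
Proof. induction n; simpl; [lra|rewrite IHn; lra]. Qed.

Lemma rsum_minus n g h : rsum n (fun j => g j - h j) = rsum n g - rsum n h.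
Proof. induction n; simpl; [lra|rewrite IHn; lra]. Qed.

Lemma rsum_abs n g : Rabs (rsum n g) <= rsum n (fun j => Rabs (g j)).
Proof. induction n; simpl. rewrite Rabs_R0; lra.
  eapply Rle_trans; [apply Rabs_triang|]. lra. Qed.

Lemma rsum_term_le n g j : (forall k, (k < n)%nat -> 0 <= g k) -> (j < n)%nat -> g j <= rsum n g.
Proof. induction n; intros H Hj; [lia|]. simpl.
  destruct (Nat.eq_dec j n) as [->|Hne].
  - assert (0 <= rsum n g) by (apply rsum_nonneg; intros; apply H; lia). lra.
  - assert (g j <= rsum n g) by (apply IHn; [intros; apply H; lia| lia]).
    assert (0 <= g n) by (apply H; lia). lra. Qed.

Lemma rsum_delta n i c : (i < n)%nat ->
  rsum n (fun j => if Nat.eq_dec i j then c else 0) = c.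
Proof. induction n; intros Hi; [lia|]. simpl. destruct (Nat.eq_dec i n) as [->|Hne].
  - rewrite (rsum_ext n _ (fun _ => 0)). rewrite rsum_zero; lra.
    intros j Hj. destruct (Nat.eq_dec n j); [lia|auto].
  - rewrite IHn by lia. lra. Qed.

Lemma rsum_swap n m g : rsum n (fun i => rsum m (fun j => g i j)) = rsum m (fun j => rsum n (fun i => g i j)).
Proof. induction n; simpl. rewrite rsum_zero; auto.
  rewrite IHn. rewrite <- rsum_plus. auto. Qed.

Lemma rsum_cv n (s : nat -> nat -> R) (l : nat -> R) :
  (forall j, (j < n)%nat -> Un_cv (s j) (l j)) ->
  Un_cv (fun N => rsum n (fun j => s j N)) (rsum n l).
Proof. induction n; simpl; intros H.
  - intros e He; exists O; intros; rewrite R_dist_eq; lra.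
  - apply CV_plus. apply IHn; intros; apply H; lia. apply H; lia. Qed.

Lemma rsum_derive n (g g' : nat -> R -> R) x :
  (forall j, (j < n)%nat -> is_derive (g j) x (g' j x)) ->
  is_derive (fun y => rsum n (fun j => g j y)) x (rsum n (fun j => g' j x)).
Proof. induction n; simpl; intros H.
  - apply (is_derive_const 0).
  - apply (is_derive_plus (fun y => rsum n (fun j => g j y)) (g n)).
    apply IHn; intros; apply H; lia. apply H; lia. Qed.

Lemma rsum_RInt n (g : nat -> R -> R) a b :
  (forall j, (j < n)%nat -> ex_RInt (g j) a b) ->
  ex_RInt (fun y => rsum n (fun j => g j y)) a b /\
  RInt (fun y => rsum n (fun j => g j y)) a b = rsum n (fun j => RInt (g j) a b).
Proof. induction n; simpl; intros H.
  - split. apply ex_RInt_const. rewrite RInt_const. unfold scal; simpl; unfold mult; simpl. lra.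
  - destruct IHn as [H1 H2]. intros; apply H; lia.
    assert (Hn : ex_RInt (g n) a b) by (apply H; lia).
    split. apply (ex_RInt_plus (fun y => rsum n (fun j => g j y)) (g n)); auto.
    etransitivity. apply (RInt_plus (fun y => rsum n (fun j => g j y)) (g n)); auto.
    rewrite H2; reflexivity. Qed.

Lemma rsum_cont n (g : nat -> R -> R) x :
  (forall j, (j < n)%nat -> continuous (g j) x) ->
  continuous (fun y => rsum n (fun j => g j y)) x.
Proof. induction n; simpl; intros H.
  - apply continuous_const.
  - apply (continuous_plus (fun y => rsum n (fun j => g j y)) (g n)).
    apply IHn; intros; apply H; lia. apply H; lia. Qed.

Section Exp.
Variable d : nat.

Lemma mv_ext q u v i : (forall j, (j < d)%nat -> u j = v j) -> mv d q u i = mv d q v i.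
Proof. intros H; unfold mv; apply rsum_ext; intros; rewrite H; auto. Qed.

Lemma mpowv_ext q k u v i : (forall j, (j < d)%nat -> u j = v j) -> (i < d)%nat ->
  mpowv d q k u i = mpowv d q k v i.
Proof. intros H. revert i. induction k; simpl; intros i Hi; auto. apply mv_ext; auto. Qed.

Lemma mpowv_shift q k u : mpowv d q k (mv d q u) = mpowv d q (S k) u.
Proof. induction k; simpl; auto. rewrite IHk. reflexivity. Qed.

Definition N1 (u : vec) := rsum d (fun j => Rabs (u j)).
Definition Lq (q : mat) := rsum d (fun a => rsum d (fun b => Rabs (q a b))).

Lemma N1_ge u j : (j < d)%nat -> Rabs (u j) <= N1 u.
Proof. intros; unfold N1; apply (rsum_term_le d (fun j => Rabs (u j))); auto; intros; apply Rabs_pos. Qed.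
Lemma N1_pos u : 0 <= N1 u.
Proof. apply rsum_nonneg; intros; apply Rabs_pos. Qed.
Lemma Lq_pos q : 0 <= Lq q.
Proof. apply rsum_nonneg; intros; apply rsum_nonneg; intros; apply Rabs_pos. Qed.

Lemma N1_mv q u : N1 (mv d q u) <= Lq q * N1 u.
Proof. unfold N1 at 1, Lq. rewrite Rmult_comm, <- rsum_scal. apply rsum_le; intros a Ha.
  unfold mv. eapply Rle_trans; [apply rsum_abs|]. rewrite <- rsum_scal. apply rsum_le; intros b Hb.
  rewrite Rabs_mult. rewrite (Rmult_comm (N1 u)). apply Rmult_le_compat_l. apply Rabs_pos. apply N1_ge; auto. Qed.

Lemma N1_mpowv q k u : N1 (mpowv d q k u) <= Lq q ^ k * N1 u.
Proof. induction k; simpl. lra. eapply Rle_trans; [apply N1_mv|].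
  rewrite Rmult_assoc. apply Rmult_le_compat_l; auto. apply Lq_pos. Qed.

Definition coef q u i k := mpowv d q k u i / INR (fact k).

Lemma pow_fact_le_exp x n : 0 <= x -> x ^ n / INR (fact n) <= exp x.
Proof. intros Hx. pose proof (is_exp_Reals x) as H. apply is_pseries_Reals in H.
  unfold Pser, infinite_sum in H.
  assert (Hc : Un_cv (fun N => sum_f_R0 (fun k => / INR (fact k) * x ^ k) N) (exp x)).
  { intros e He; destruct (H e He) as [N HN]; exists N; intros; apply HN; auto. }
  assert (Hg : Un_growing (fun N => sum_f_R0 (fun k => / INR (fact k) * x ^ k) N)).
  { intros m; rewrite tech5. assert (0 <= / INR (fact (S m)) * x ^ S m).
    apply Rmult_le_pos. left; apply Rinv_0_lt_compat, INR_fact_lt_0. apply pow_le; auto. lra. }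
  pose proof (growing_ineq _ _ Hg Hc n).
  assert (x ^ n / INR (fact n) <= sum_f_R0 (fun k => / INR (fact k) * x ^ k) n).
  { destruct n. simpl. unfold Rdiv. lra. rewrite tech5.
    assert (0 <= sum_f_R0 (fun k => / INR (fact k) * x ^ k) n).
    apply cond_pos_sum; intros; apply Rmult_le_pos. left; apply Rinv_0_lt_compat, INR_fact_lt_0. apply pow_le; auto.
    unfold Rdiv. rewrite (Rmult_comm (x ^ S n)). lra. }
  lra. Qed.

Lemma coef_bound q u i k x : (i < d)%nat ->
  Rabs (coef q u i k * x ^ k) <= N1 u * exp (Lq q * Rabs x).
Proof. intros Hi. unfold coef. rewrite Rabs_mult, Rabs_div, <- RPow_abs.
  2: apply not_0_INR, fact_neq_0.
  rewrite (Rabs_right (INR _)) by (left; apply INR_fact_lt_0).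
  assert (H1 : Rabs (mpowv d q k u i) <= Lq q ^ k * N1 u).
  { eapply Rle_trans. apply N1_ge; auto. apply N1_mpowv. }
  assert (H2 : (Lq q * Rabs x) ^ k / INR (fact k) <= exp (Lq q * Rabs x)).
  { apply pow_fact_le_exp. apply Rmult_le_pos. apply Lq_pos. apply Rabs_pos. }
  rewrite Rpow_mult_distr in H2.
  assert (Hf : 0 < / INR (fact k)) by (apply Rinv_0_lt_compat, INR_fact_lt_0).
  unfold Rdiv in *.
  apply Rle_trans with (Lq q ^ k * N1 u * / INR (fact k) * Rabs x ^ k).
  { apply Rmult_le_compat_r. apply pow_le, Rabs_pos. unfold Rdiv.
    apply Rmult_le_compat_r; lra. }
  replace (Lq q ^ k * N1 u * / INR (fact k) * Rabs x ^ k) with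
    (N1 u * (Lq q ^ k * Rabs x ^ k * / INR (fact k))) by ring.
  apply Rmult_le_compat_l; auto. apply N1_pos. Qed.

Lemma coef_radius q u i : (i < d)%nat -> CV_radius (coef q u i) = p_infty.
Proof. intros Hi. pose proof (CV_radius_bounded (coef q u i)) as [Hub _].
  assert (Hall : forall r : R, Rbar_le r (CV_radius (coef q u i))).
  { intros r. apply Hub. exists (N1 u * exp (Lq q * Rabs r)). intros n. apply coef_bound; auto. }
  destruct (CV_radius (coef q u i)) eqn:E; auto.
  - specialize (Hall (r + 1)). simpl in Hall. lra.
  - specialize (Hall 0). simpl in Hall. contradiction. Qed.

Lemma coef_in q u i x : (i < d)%nat -> Rbar_lt (Rabs x) (CV_radius (coef q u i)).
Proof. intros Hi; rewrite coef_radius; simpl; auto. Qed.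

Lemma rlim_eq s l : Un_cv s l -> rlim s = l.
Proof. intros H. unfold rlim. apply (UL_sequence s); auto.
  apply (epsilon_spec (inhabits 0) (fun l => Un_cv s l)). exists l; auto. Qed.

Lemma mexpv_cv_PS t q u i : (i < d)%nat ->
  Un_cv (fun N => sum_f_R0 (fun k => t ^ k / INR (fact k) * mpowv d q k u i) N)
        (PSeries (coef q u i) t).
Proof. intros Hi. pose proof (CV_radius_inside _ _ (coef_in q u i t Hi)) as Hex.
  apply Series_correct in Hex. apply is_lim_seq_Reals in Hex.
  assert (E1 : PSeries (coef q u i) t = Series (fun k => scal (pow_n t k) (coef q u i k))).
  { unfold PSeries. apply Series_ext. intros k. rewrite (pow_n_pow t k). change (scal (t ^ k) (coef q u i k)) with (t ^ k * coef q u i k); ring. }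
  rewrite E1.
  intros e He; destruct (Hex e He) as [N HN]; exists N; intros n Hn.
  specialize (HN n Hn). rewrite <- sum_n_Reals.
  replace (sum_n (fun k => t ^ k / INR (fact k) * mpowv d q k u i) n) with
    (sum_n (fun k => scal (pow_n t k) (coef q u i k)) n). exact HN.
  apply sum_n_ext; intros k. rewrite pow_n_pow. unfold scal; simpl; unfold mult; simpl; unfold coef. unfold Rdiv; ring. Qed.

Lemma mexpv_PS t q u i : (i < d)%nat -> mexpv d t q u i = PSeries (coef q u i) t.
Proof. intros Hi. unfold mexpv. apply rlim_eq. apply mexpv_cv_PS; auto. Qed.

Lemma mexpv_cv t q u i : (i < d)%nat ->
  Un_cv (fun N => sum_f_R0 (fun k => t ^ k / INR (fact k) * mpowv d q k u i) N)
        (mexpv d t q u i).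
Proof. intros Hi; rewrite mexpv_PS; auto; apply mexpv_cv_PS; auto. Qed.

Lemma mexpv_derive t q u i : (i < d)%nat ->
  is_derive (fun s => mexpv d s q u i) t (mexpv d t q (mv d q u) i).
Proof. intros Hi. apply (is_derive_ext (PSeries (coef q u i))).
  intros; rewrite mexpv_PS; auto.
  rewrite mexpv_PS; auto.
  replace (PSeries (coef q (mv d q u) i) t) with (PSeries (PS_derive (coef q u i)) t).
  apply is_derive_PSeries. apply coef_in; auto.
  apply PSeries_ext. intros n. unfold PS_derive, coef. rewrite mpowv_shift.
  rewrite fact_simpl, mult_INR. field. split. apply not_0_INR, fact_neq_0. apply not_0_INR; lia. Qed.

Lemma mexpv_cont t q u i : (i < d)%nat -> continuous (fun s => mexpv d s q u i) t.
Proof. intros Hi. apply (@ex_derive_continuous R_AbsRing R_NormedModule). eexists. apply mexpv_derive; auto. Qed.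

Lemma mexpv_0 q u i : (i < d)%nat -> mexpv d 0 q u i = u i.
Proof. intros Hi; rewrite mexpv_PS; auto. rewrite PSeries_0. unfold coef; simpl. field. Qed.

Lemma sum_rsum_swap N n (g : nat -> nat -> R) :
  sum_f_R0 (fun k => rsum n (fun j => g j k)) N = rsum n (fun j => sum_f_R0 (fun k => g j k) N).
Proof. induction N; simpl; auto. rewrite IHN. rewrite <- rsum_plus; auto. Qed.

Lemma mexpv_lin t q u i n (c : nat -> R) (w : nat -> vec) (idx : nat -> nat) :
  (i < d)%nat -> (forall j, (j < n)%nat -> (idx j < d)%nat) ->
  (forall k, mpowv d q k u i = rsum n (fun j => c j * mpowv d q k (w j) (idx j))) ->
  mexpv d t q u i = rsum n (fun j => c j * mexpv d t q (w j) (idx j)).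
Proof. intros Hi Hidx H. eapply UL_sequence. apply mexpv_cv; auto.
  eapply Un_cv_ext.
  2: { apply (rsum_cv n (fun j N => c j * sum_f_R0 (fun k => t ^ k / INR (fact k) * mpowv d q k (w j) (idx j)) N)).
       intros j Hj. apply CV_mult. intros e He; exists O; intros; rewrite R_dist_eq; auto.
       apply mexpv_cv; auto. }
  intros N. simpl.
  transitivity (rsum n (fun j => sum_f_R0 (fun k => c j * (t ^ k / INR (fact k) * mpowv d q k (w j) (idx j))) N)).
  { apply rsum_ext; intros j _. rewrite scal_sum. apply sum_eq; intros; ring. }
  rewrite <- sum_rsum_swap. apply sum_eq; intros k _.
  rewrite H. rewrite <- rsum_scal. apply rsum_ext; intros. ring. Qed.
End Exp.

Section Mat.
Variable d : nat.
Definition ej (j : nat) : vec := fun k => if Nat.eq_dec j k then 1 else 0.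

Lemma mv_lin q u v a b i : mv d q (fun j => a * u j + b * v j) i = a * mv d q u i + b * mv d q v i.
Proof. unfold mv. rewrite <- !rsum_scal, <- rsum_plus. apply rsum_ext; intros; ring. Qed.

Lemma mpowv_lin q k u v a b i : mpowv d q k (fun j => a * u j + b * v j) i = a * mpowv d q k u i + b * mpowv d q k v i.
Proof. revert i; induction k; simpl; intros i; auto.
  rewrite <- mv_lin. apply mv_ext; intros; auto. Qed.

Lemma mpowv_decomp q k v i : (i < d)%nat -> mpowv d q k v i = rsum d (fun j => v j * mpowv d q k (ej j) i).
Proof. revert i; induction k; simpl; intros i Hi.
  - rewrite (rsum_ext d _ (fun j => if Nat.eq_dec i j then v i else 0)). rewrite rsum_delta; auto.
    intros j Hj. unfold ej. destruct (Nat.eq_dec j i), (Nat.eq_dec i j); subst; try lia; ring.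
  - unfold mv. rewrite (rsum_ext d _ (fun l => q i l * rsum d (fun j => v j * mpowv d q k (ej j) l))).
    2: { intros; rewrite IHk; auto. }
    rewrite (rsum_ext d (fun j => v j * _) (fun j => rsum d (fun l => q i l * (v j * mpowv d q k (ej j) l)))).
    2: { intros j Hj. rewrite <- rsum_scal. apply rsum_ext; intros; ring. }
    rewrite <- rsum_swap. apply rsum_ext; intros. rewrite <- rsum_scal. auto. Qed.

Lemma mexpv_lin2 t q u v a b i : (i < d)%nat ->
  mexpv d t q (fun j => a * u j + b * v j) i = a * mexpv d t q u i + b * mexpv d t q v i.
Proof. intros Hi.
  rewrite (mexpv_lin d t q _ i 2 (fun j => match j with O => a | _ => b end)
     (fun j => match j with O => u | _ => v end) (fun _ => i)); auto.
  simpl; ring. intros k. rewrite mpowv_lin. simpl. ring. Qed.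

Lemma mexpv_ext t q u v i : (i < d)%nat -> (forall j, (j < d)%nat -> u j = v j) ->
  mexpv d t q u i = mexpv d t q v i.
Proof. intros Hi H.
  rewrite (mexpv_lin d t q _ i 1 (fun _ => 1) (fun _ => v) (fun _ => i)); auto.
  simpl; ring. intros k. simpl. rewrite (mpowv_ext d q k u v); auto. ring. Qed.

Lemma mexpv_comm t q u i : (i < d)%nat ->
  mexpv d t q (mv d q u) i = mv d q (fun j => mexpv d t q u j) i.
Proof. intros Hi. unfold mv at 2.
  apply (mexpv_lin d t q _ i d (fun j => q i j) (fun _ => u) (fun j => j)); auto.
  intros k. rewrite mpowv_shift. simpl. reflexivity. Qed.

Lemma mexpv_decomp t q v i : (i < d)%nat ->
  mexpv d t q v i = rsum d (fun j => v j * mexpv d t q (ej j) i).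
Proof. intros Hi. apply (mexpv_lin d t q _ i d v ej (fun _ => i)); auto.
  intros; apply mpowv_decomp; auto. Qed.

Lemma mexpv_decomp_q t q v i : (i < d)%nat ->
  mexpv d t q (mv d q v) i = rsum d (fun j => v j * mexpv d t q (mv d q (ej j)) i).
Proof. intros Hi. apply (mexpv_lin d t q _ i d v (fun j => mv d q (ej j)) (fun _ => i)); auto.
  intros k. rewrite !mpowv_shift. rewrite mpowv_decomp; auto. apply rsum_ext; intros.
  rewrite mpowv_shift; auto. Qed.

Lemma mexpv_zero t q u i : (i < d)%nat -> (forall j, (j < d)%nat -> u j = 0) -> mexpv d t q u i = 0.
Proof. intros Hi H. rewrite (mexpv_ext t q u (fun j => 0 * u j + 0 * u j)); auto.
  rewrite mexpv_lin2; auto. ring. intros; rewrite H; auto; ring. Qed.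

Lemma mexpv_derive_shift t b q u i : (i < d)%nat ->
  is_derive (fun s => mexpv d (s + b) q u i) t (mexpv d (t + b) q (mv d q u) i).
Proof. intros Hi.
  assert (H := is_derive_comp (fun s => mexpv d s q u i) (fun s => s + b) t _ 1 (mexpv_derive d (t+b) q u i Hi)).
  assert (H2 : is_derive (fun s : R => s + b) t 1).
  { auto_derive; auto; ring. }
  specialize (H H2). unfold scal in H; simpl in H; unfold mult in H; simpl in H.
  rewrite Rmult_1_l in H. exact H. Qed.

Lemma mexpv_derive_rev t c q u i : (i < d)%nat ->
  is_derive (fun s => mexpv d (c - s) q u i) t (- mexpv d (c - t) q (mv d q u) i).
Proof. intros Hi.
  assert (H := is_derive_comp (fun s => mexpv d s q u i) (fun s => c - s) t _ (-1) (mexpv_derive d (c-t) q u i Hi)).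
  assert (H2 : is_derive (fun s : R => c - s) t (-1)).
  { auto_derive; auto; ring. }
  specialize (H H2). unfold scal in H; simpl in H; unfold mult in H; simpl in H.
  replace (- mexpv d (c - t) q (mv d q u) i) with (-1 * mexpv d (c - t) q (mv d q u) i) by ring. exact H. Qed.

Lemma ej_0 j i : (i < d)%nat -> mexpv d 0 (fun _ _ => 0) (ej j) i = ej j i.
Proof. intros; apply mexpv_0; auto. Qed.

Lemma uniq q (phi : R -> vec) :
  (forall a i, (i < d)%nat -> is_derive (fun s => phi s i) a (mv d q (phi a) i)) ->
  (forall i, (i < d)%nat -> phi 0 i = 0) ->
  forall c i, (i < d)%nat -> phi c i = 0.
Proof. intros Hd H0 c i Hi.
  set (psi := fun a => rsum d (fun j => mexpv d (c - a) q (ej j) i * phi a j)).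
  assert (Hpsi : forall a, is_derive psi a 0).
  { intros a. unfold psi.
    assert (Hs := rsum_derive d (fun j y => mexpv d (c - y) q (ej j) i * phi y j)
       (fun j y => - mexpv d (c - y) q (mv d q (ej j)) i * phi y j + mexpv d (c - y) q (ej j) i * mv d q (phi y) j) a).
    assert (E : rsum d (fun j => - mexpv d (c - a) q (mv d q (ej j)) i * phi a j + mexpv d (c - a) q (ej j) i * mv d q (phi a) j) = 0).
    { rewrite rsum_plus.
      rewrite (rsum_ext d _ (fun j => - (phi a j * mexpv d (c - a) q (mv d q (ej j)) i))) by (intros; ring).
      rewrite rsum_opp, <- mexpv_decomp_q; auto.
      rewrite (rsum_ext d _ (fun j => mv d q (phi a) j * mexpv d (c - a) q (ej j) i)) by (intros; ring).
      rewrite <- mexpv_decomp; auto. ring. }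
    cbv beta in Hs. rewrite E in Hs. apply Hs. intros j Hj.
    apply (is_derive_mult (fun y => mexpv d (c - y) q (ej j) i) (fun y => phi y j)).
    apply mexpv_derive_rev; auto. apply Hd; auto. intros; apply Rmult_comm. }
  assert (Hc : constant psi).
  { assert (Hl : forall x, derivable_pt_lim psi x 0) by (intros; apply is_derive_Reals; auto).
    set (pr := fun x => exist (fun l => derivable_pt_lim psi x l) 0 (Hl x) : derivable_pt psi x).
    assert (K : forall x y, x < y -> psi x = psi y).
    { intros x y Hxy. destruct (MVT_cor1 psi x y pr Hxy) as [z [Hz _]].
      simpl in Hz. lra. }
    intros x y. destruct (Rtotal_order x y) as [H|[H|H]]; [apply K; auto|subst; auto|symmetry; apply K; auto]. }
  assert (E0 : psi 0 = 0).
  { unfold psi. rewrite (rsum_ext d _ (fun _ => 0)). apply rsum_zero. intros j Hj; rewrite H0; auto; ring. }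
  assert (Ec : psi c = phi c i).
  { unfold psi. rewrite (rsum_ext d _ (fun j => if Nat.eq_dec i j then phi c i else 0)).
    apply rsum_delta; auto. intros j Hj. replace (c - c) with 0 by ring. rewrite mexpv_0; auto.
    unfold ej. destruct (Nat.eq_dec j i), (Nat.eq_dec i j); subst; try lia; ring. }
  rewrite <- Ec, <- E0. apply Hc. Qed.
End Mat.

Section Q.
Variable d : nat.

Lemma mexpv_semigroup a b q u i : (i < d)%nat ->
  mexpv d (a + b) q u i = mexpv d a q (fun j => mexpv d b q u j) i.
Proof. intros Hi.
  set (v := fun j => mexpv d b q u j).
  set (phi := fun s (k : nat) => mexpv d s q v k - mexpv d (s + b) q u k).
  assert (Hz : forall c k, (k < d)%nat -> phi c k = 0).
  { apply (uniq d q phi).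
    - intros s k Hk. unfold phi.
      apply (is_derive_ext (fun y => minus (mexpv d y q v k) (mexpv d (y + b) q u k))). intros; reflexivity.
      replace (mv d q (fun k0 => mexpv d s q v k0 - mexpv d (s + b) q u k0) k)
        with (minus (mexpv d s q (mv d q v) k) (mexpv d (s + b) q (mv d q u) k)).
      apply (@is_derive_minus R_AbsRing R_NormedModule (fun y => mexpv d y q v k) (fun y => mexpv d (y + b) q u k)).
      apply mexpv_derive; auto. apply mexpv_derive_shift; auto.
      rewrite (mv_ext d q _ (fun k0 => 1 * mexpv d s q v k0 + (-1) * mexpv d (s + b) q u k0)) by (intros; ring).
      rewrite mv_lin. rewrite !mexpv_comm; auto. unfold minus, plus, opp; simpl. unfold mv; cbv beta; ring.
    - intros k Hk. unfold phi. rewrite mexpv_0; auto. unfold v. rewrite Rplus_0_l. ring. }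
  specialize (Hz a i Hi). unfold phi, v in *. lra. Qed.

Definition cq (q : mat) := rsum d (fun k => Rabs (q k k)).
Definition Aq (q : mat) : mat := fun i j => q i j + (if Nat.eq_dec i j then cq q else 0).

Lemma mv_Aq q v i : (i < d)%nat -> mv d (Aq q) v i = mv d q v i + cq q * v i.
Proof. intros Hi. unfold mv, Aq.
  rewrite (rsum_ext d _ (fun j => q i j * v j + (if Nat.eq_dec i j then cq q * v i else 0))).
  rewrite rsum_plus, rsum_delta; auto.
  intros j Hj. destruct (Nat.eq_dec i j); subst; ring. Qed.

Lemma Aq_nonneg q i j : Qmatrix d q -> (i < d)%nat -> (j < d)%nat -> 0 <= Aq q i j.
Proof. intros [H1 [H2 _]] Hi Hj. unfold Aq. destruct (Nat.eq_dec i j).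
  - subst. assert (Rabs (q j j) <= cq q).
    { unfold cq. apply (rsum_term_le d (fun k => Rabs (q k k))); auto. intros; apply Rabs_pos. }
    assert (- q j j <= Rabs (q j j)) by (rewrite <- Rabs_Ropp; apply RRle_abs). lra.
  - assert (0 <= q i j) by (apply H2; auto). lra. Qed.

Lemma mpowv_A_nonneg q k u j : Qmatrix d q -> (forall l, (l < d)%nat -> 0 <= u l) -> (j < d)%nat ->
  0 <= mpowv d (Aq q) k u j.
Proof. intros HQ Hu. revert j. induction k; simpl; intros j Hj; auto.
  unfold mv. apply rsum_nonneg; intros. apply Rmult_le_pos. apply Aq_nonneg; auto. apply IHk; auto. Qed.

Lemma mexpv_A_nonneg t q u i : Qmatrix d q -> 0 <= t -> (forall l, (l < d)%nat -> 0 <= u l) -> (i < d)%nat ->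
  0 <= mexpv d t (Aq q) u i.
Proof. intros HQ Ht Hu Hi.
  eapply Rle_cv_lim with (Un := fun _ => 0) (Vn := fun N => sum_f_R0 (fun k => t ^ k / INR (fact k) * mpowv d (Aq q) k u i) N).
  intros n. apply cond_pos_sum. intros k. apply Rmult_le_pos. unfold Rdiv. apply Rmult_le_pos.
  apply pow_le; auto. left; apply Rinv_0_lt_compat, INR_fact_lt_0. apply mpowv_A_nonneg; auto.
  intros e He; exists O; intros; rewrite R_dist_eq; auto.
  apply mexpv_cv; auto. Qed.

Lemma mexpv_nonneg t q u i : Qmatrix d q -> 0 <= t -> (forall l, (l < d)%nat -> 0 <= u l) -> (i < d)%nat ->
  0 <= mexpv d t q u i.
Proof. intros HQ Ht Hu Hi.
  set (c := cq q).
  set (phi := fun s (k : nat) => mexpv d s q u k - exp (- c * s) * mexpv d s (Aq q) u k).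
  assert (Hz : forall s k, (k < d)%nat -> phi s k = 0).
  { apply (uniq d q phi).
    - intros s k Hk. unfold phi.
      assert (He : is_derive (fun y => exp (- c * y)) s (- c * exp (- c * s))).
      { auto_derive; auto; ring. }
      apply (is_derive_ext (fun y => minus (mexpv d y q u k) (mult (exp (- c * y)) (mexpv d y (Aq q) u k)))). intros; reflexivity.
      replace (mv d q (fun k0 => mexpv d s q u k0 - exp (- c * s) * mexpv d s (Aq q) u k0) k)
        with (minus (mexpv d s q (mv d q u) k)
           (plus (mult (- c * exp (- c * s)) (mexpv d s (Aq q) u k)) (mult (exp (- c * s)) (mexpv d s (Aq q) (mv d (Aq q) u) k)))).
      apply (@is_derive_minus R_AbsRing R_NormedModule (fun y => mexpv d y q u k) (fun y => mult (exp (- c * y)) (mexpv d y (Aq q) u k))).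
      apply mexpv_derive; auto. apply (is_derive_mult (fun y => exp (- c * y)) (fun y => mexpv d y (Aq q) u k)); auto.
      apply mexpv_derive; auto. intros; apply Rmult_comm.
      rewrite (mv_ext d q _ (fun k0 => 1 * mexpv d s q u k0 + (- exp (- c * s)) * mexpv d s (Aq q) u k0)) by (intros; ring).
      rewrite mv_lin. rewrite !mexpv_comm; auto. rewrite mv_Aq; auto. unfold minus, plus, opp, mult; simpl.
      fold c. unfold mv; cbv beta. ring.
    - intros k Hk. unfold phi. rewrite !mexpv_0; auto. rewrite Rmult_0_r, exp_0. ring. }
  specialize (Hz t i Hi). unfold phi in Hz.
  assert (0 <= exp (- c * t) * mexpv d t (Aq q) u i).
  { apply Rmult_le_pos. left; apply exp_pos. apply mexpv_A_nonneg; auto. }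
  lra. Qed.

Lemma mexpv_one t q i : Qmatrix d q -> (i < d)%nat -> mexpv d t q (fun _ => 1) i = 1.
Proof. intros [_ [_ H3]] Hi. eapply UL_sequence. apply mexpv_cv; auto.
  assert (Hk : forall k, mpowv d q (S k) (fun _ => 1) i = 0).
  { intros k. rewrite <- mpowv_shift. rewrite (mpowv_ext d q k _ (fun _ => 0)); auto.
    clear. revert i; induction k; simpl; intros; auto. unfold mv. rewrite (rsum_ext d _ (fun _ => 0)).
    apply rsum_zero. intros; rewrite IHk; ring.
    intros j Hj. unfold mv. rewrite (rsum_ext d _ (q j)). apply H3; auto. intros; ring. }
  intros e He; exists O; intros n _. replace (sum_f_R0 _ n) with 1. rewrite R_dist_eq; auto.
  induction n. simpl. field. rewrite tech5, <- IHn, Hk. ring. Qed.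

Lemma mexpv_mono t q u v i : Qmatrix d q -> 0 <= t -> (forall l, (l < d)%nat -> u l <= v l) -> (i < d)%nat ->
  mexpv d t q u i <= mexpv d t q v i.
Proof. intros HQ Ht H Hi.
  assert (0 <= mexpv d t q (fun j => 1 * v j + (-1) * u j) i).
  { apply mexpv_nonneg; auto. intros l Hl; specialize (H l Hl); lra. }
  rewrite mexpv_lin2 in H0; auto. lra. Qed.

Lemma mexpv_const t q c i : Qmatrix d q -> (i < d)%nat -> mexpv d t q (fun _ => c) i = c.
Proof. intros HQ Hi. rewrite (mexpv_ext d t q _ (fun j => c * 1 + 0 * 1)); auto.
  rewrite mexpv_lin2, mexpv_one; auto. ring. intros; ring. Qed.

Lemma mexpv_shift_c t q u c i : Qmatrix d q -> (i < d)%nat ->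
  mexpv d t q (fun j => u j + c) i = mexpv d t q u i + c.
Proof. intros HQ Hi. rewrite (mexpv_ext d t q _ (fun j => 1 * u j + 1 * c)); auto.
  rewrite mexpv_lin2, mexpv_const; auto. ring. intros; ring. Qed.

Lemma mexpv_le t q u m i : Qmatrix d q -> 0 <= t -> (forall l, (l < d)%nat -> u l <= m) -> (i < d)%nat ->
  mexpv d t q u i <= m.
Proof. intros. rewrite <- (mexpv_const t q m i); auto. apply mexpv_mono; auto. Qed.

Lemma mexpv_ge t q u m i : Qmatrix d q -> 0 <= t -> (forall l, (l < d)%nat -> m <= u l) -> (i < d)%nat ->
  m <= mexpv d t q u i.
Proof. intros. rewrite <- (mexpv_const t q m i); auto. apply mexpv_mono; auto. Qed.

Lemma mexpv_lip t q u C i : Qmatrix d q -> 0 <= t -> (forall l, (l < d)%nat -> Rabs (mv d q u l) <= C) -> (i < d)%nat ->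
  Rabs (mexpv d t q u i - u i) <= C * t.
Proof. intros HQ Ht HC Hi. destruct Ht as [Ht|Ht].
  - assert (Hl : forall x, derivable_pt_lim (fun s => mexpv d s q u i) x (mexpv d x q (mv d q u) i))
      by (intros; apply is_derive_Reals, mexpv_derive; auto).
    set (pr := fun x => exist (fun l => derivable_pt_lim (fun s => mexpv d s q u i) x l) _ (Hl x)
       : derivable_pt (fun s => mexpv d s q u i) x).
    destruct (MVT_cor1 (fun s => mexpv d s q u i) 0 t pr Ht) as [z [Hz Hz2]].
    simpl in Hz. rewrite mexpv_0 in Hz; auto. rewrite Hz.
    rewrite Rabs_mult. rewrite Rminus_0_r, (Rabs_right t) by lra.
    apply Rmult_le_compat_r. lra.
    apply Rabs_le. split.
    + apply mexpv_ge; auto. lra. intros l Hl'. specialize (HC l Hl'). apply Rabs_le_between in HC. lra.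
    + apply mexpv_le; auto. lra. intros l Hl'. specialize (HC l Hl'). apply Rabs_le_between in HC. lra.
  - subst. rewrite mexpv_0; auto. rewrite Rminus_diag, Rabs_R0. lra. Qed.
End Q.

Lemma rint_eq g a b : ex_RInt g a b -> rint g a b = RInt g a b.
Proof. intros H. pose proof (ex_RInt_Reals_0 _ _ _ H) as pr.
  unfold rint. destruct (epsilon_spec (inhabits 0) (fun I => exists pr : Riemann_integrable g a b, RiemannInt pr = I)) as [pr' Hp].
  exists (RiemannInt pr); exists pr; auto.
  rewrite <- Hp. rewrite <- RInt_Reals. auto. Qed.

Lemma vsup_spec (F : vec -> Prop) i B : (exists v, F v) -> (forall v, F v -> v i <= B) ->
  is_lub (fun x => exists v, F v /\ x = v i) (vsup F i).
Proof. intros [v0 H0] HB. unfold vsup.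
  apply (epsilon_spec (inhabits 0) (fun m => is_lub (fun x => exists v, F v /\ x = v i) m)).
  destruct (completeness (fun x => exists v, F v /\ x = v i)) as [m Hm].
  exists B; intros x [v [Hv ->]]; auto. exists (v0 i); exists v0; auto. exists m; auto. Qed.

Lemma vsup_ub (F : vec -> Prop) i B v : (forall v, F v -> v i <= B) -> F v -> v i <= vsup F i.
Proof. intros HB Hv. destruct (vsup_spec F i B) as [H1 _]; eauto. Qed.

Lemma vsup_le (F : vec -> Prop) i B : (exists v, F v) -> (forall v, F v -> v i <= B) -> vsup F i <= B.
Proof. intros Hne HB. destruct (vsup_spec F i B) as [_ H2]; auto. apply H2. intros x [v [Hv ->]]; auto. Qed.

Lemma vsup_approx (F : vec -> Prop) i B e : (exists v, F v) -> (forall v, F v -> v i <= B) -> 0 < e ->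
  exists v, F v /\ vsup F i - e < v i.
Proof. intros Hne HB He. apply NNPP; intros Hn.
  assert (vsup F i <= vsup F i - e).
  { apply vsup_le; auto. intros v Hv. apply Rnot_lt_le. intros Hl. apply Hn. exists v; auto. }
  lra. Qed.

Section Int.
Variable d : nat.

Lemma mexpv_ex_RInt q v i a b : (i < d)%nat -> ex_RInt (fun s => mexpv d s q v i) a b.
Proof. intros Hi. apply (@ex_RInt_continuous R_CompleteNormedModule). intros; apply mexpv_cont; auto. Qed.

Lemma mexpv_RInt q u i h : (i < d)%nat ->
  RInt (fun s => mexpv d s q (mv d q u) i) 0 h = mexpv d h q u i - u i.
Proof. intros Hi. apply is_RInt_unique.
  replace (mexpv d h q u i - u i) with (minus (mexpv d h q u i) (mexpv d 0 q u i)).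
  apply (@is_RInt_derive R_CompleteNormedModule (fun s => mexpv d s q u i)).
  intros; apply mexpv_derive; auto. intros; apply mexpv_cont; auto.
  rewrite mexpv_0; auto. Qed.

Lemma Sq_RInt q fq h u0 i : (i < d)%nat ->
  Sq d q fq h u0 i - u0 i = RInt (fun s => mexpv d s q (fun j => mv d q u0 j + fq j) i) 0 h.
Proof. intros Hi. unfold Sq. rewrite rint_eq by (apply mexpv_ex_RInt; auto).
  rewrite (RInt_ext (fun s => mexpv d s q (fun j => mv d q u0 j + fq j) i) (fun s => plus (mexpv d s q (mv d q u0) i) (mexpv d s q fq i))).
  rewrite (@RInt_plus R_CompleteNormedModule (fun s => mexpv d s q (mv d q u0) i) (fun s => mexpv d s q fq i)) by (apply mexpv_ex_RInt; auto).
  rewrite mexpv_RInt; auto.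
  unfold plus; simpl. ring.
  intros x _. rewrite (mexpv_ext d x q _ (fun j => 1 * mv d q u0 j + 1 * fq j)); auto.
  rewrite mexpv_lin2; auto. unfold plus; simpl. ring. intros; ring. Qed.

Lemma Sq_zero q h u i : (i < d)%nat -> Sq d q (fun _ => 0) h u i = mexpv d h q u i.
Proof. intros Hi. unfold Sq. rewrite rint_eq by (apply mexpv_ex_RInt; auto).
  rewrite (RInt_ext _ (fun _ => 0)). rewrite RInt_const. unfold scal; simpl; unfold mult; simpl. ring.
  intros; apply mexpv_zero; auto. Qed.

Lemma Sq_le_N1 q fq h u i : Qmatrix d q -> 0 <= h -> (forall j, (j < d)%nat -> fq j <= 0) -> (i < d)%nat ->
  Sq d q fq h u i <= N1 d u.
Proof. intros HQ Hh Hf Hi. unfold Sq. rewrite rint_eq by (apply mexpv_ex_RInt; auto).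
  assert (mexpv d h q u i <= N1 d u).
  { apply mexpv_le; auto. intros l Hl. eapply Rle_trans. apply RRle_abs. apply N1_ge; auto. }
  assert (RInt (fun s => mexpv d s q fq i) 0 h <= RInt (fun _ => 0) 0 h).
  { apply RInt_le; auto. apply mexpv_ex_RInt; auto. apply ex_RInt_const.
    intros x Hx. apply mexpv_le; auto. lra. }
  rewrite RInt_const in H0. unfold scal in H0; simpl in H0; unfold mult in H0; simpl in H0. lra. Qed.

Lemma Sq_lin q fq h u z i : (i < d)%nat ->
  Sq d q fq h (fun j => u j + z j) i = Sq d q fq h u i + mexpv d h q z i.
Proof. intros Hi. unfold Sq. rewrite (mexpv_ext d h q _ (fun j => 1 * u j + 1 * z j)); auto.
  rewrite mexpv_lin2; auto. ring. intros; ring. Qed.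
End Int.

Section EhS.
Variable d : nat.
Variable P : mat -> Prop.
Variable f : mat -> vec.
Variable q0 : mat.
Hypothesis HQ : forall q, P q -> Qmatrix d q.
Hypothesis Hq0 : P q0.
Hypothesis Hfle : forall q, P q -> forall i, (i < d)%nat -> f q i <= 0.

Lemma Eh_ub h u i q : 0 <= h -> (i < d)%nat -> P q -> Sq d q (f q) h u i <= Eh d P f h u i.
Proof. intros Hh Hi Hq. unfold Eh. apply (vsup_ub _ i (N1 d u)).
  intros v [q' [Hq' ->]]. apply Sq_le_N1; auto. exists q; auto. Qed.

Lemma Eh_le h u i B : 0 <= h -> (i < d)%nat -> (forall q, P q -> Sq d q (f q) h u i <= B) -> Eh d P f h u i <= B.
Proof. intros Hh Hi HB. unfold Eh. apply vsup_le. exists (Sq d q0 (f q0) h u); exists q0; auto.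
  intros v [q' [Hq' ->]]. auto. Qed.

Lemma Eh_lip h u v c i : 0 <= h -> (i < d)%nat -> (forall j, (j < d)%nat -> u j <= v j + c) ->
  Eh d P f h u i <= Eh d P f h v i + c.
Proof. intros Hh Hi H. apply Eh_le; auto. intros q Hq.
  assert (Sq d q (f q) h u i <= Sq d q (f q) h v i + c).
  { unfold Sq. assert (mexpv d h q u i <= mexpv d h q (fun j => v j + c) i) by (apply mexpv_mono; auto).
    rewrite mexpv_shift_c in H0; auto. lra. }
  assert (Sq d q (f q) h v i <= Eh d P f h v i) by (apply Eh_ub; auto). lra. Qed.

Lemma Eh_mono h u v i : 0 <= h -> (i < d)%nat -> (forall j, (j < d)%nat -> u j <= v j) ->
  Eh d P f h u i <= Eh d P f h v i.
Proof. intros. rewrite <- (Rplus_0_r (Eh d P f h v i)). apply Eh_lip; auto. intros; rewrite Rplus_0_r; auto. Qed.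

Lemma Sq_0 q fq u i : (i < d)%nat -> Sq d q fq 0 u i = u i.
Proof. intros Hi. unfold Sq. rewrite rint_eq by (apply mexpv_ex_RInt; auto). rewrite RInt_point, mexpv_0; auto.
  unfold zero; simpl. ring. Qed.

Lemma Eh_0 u i : (i < d)%nat -> Eh d P f 0 u i = u i.
Proof. intros Hi. apply Rle_antisym. apply Eh_le; auto. lra. intros; rewrite Sq_0; auto. lra.
  rewrite <- (Sq_0 q0 (f q0) u i); auto. apply Eh_ub; auto. lra. Qed.
End EhS.

Section Eh0S.
Variable d : nat.
Variable P : mat -> Prop.
Variable q0 : mat.
Hypothesis HQ : forall q, P q -> Qmatrix d q.
Hypothesis Hq0 : P q0.
Let f0 : mat -> vec := fun _ _ => 0.
Lemma f0le : forall q, P q -> forall i, (i < d)%nat -> f0 q i <= 0.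
Proof. intros; unfold f0; lra. Qed.

Lemma T_le_Eh0 h u i q : 0 <= h -> (i < d)%nat -> P q -> mexpv d h q u i <= Eh d P f0 h u i.
Proof. intros. rewrite <- Sq_zero; auto. apply (Eh_ub d P f0); auto. apply f0le. Qed.

Lemma Eh0_le h u i B : 0 <= h -> (i < d)%nat -> (forall q, P q -> mexpv d h q u i <= B) -> Eh d P f0 h u i <= B.
Proof. intros. apply (Eh_le d P f0 q0); auto. intros; unfold f0; rewrite Sq_zero; auto. Qed.

Lemma Eh_sub (f : mat -> vec) h u z i : (forall q, P q -> forall i, (i < d)%nat -> f q i <= 0) ->
  0 <= h -> (i < d)%nat ->
  Eh d P f h (fun j => u j + z j) i <= Eh d P f h u i + Eh d P f0 h z i.
Proof. intros Hfle Hh Hi. apply (Eh_le d P f q0); auto. intros q Hq. rewrite Sq_lin; auto.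
  assert (Sq d q (f q) h u i <= Eh d P f h u i) by (apply Eh_ub; auto).
  assert (mexpv d h q z i <= Eh d P f0 h z i) by (apply T_le_Eh0; auto). lra. Qed.

Lemma Eh0_upper h u C i : 0 <= h -> (i < d)%nat ->
  (forall q, P q -> forall l, (l < d)%nat -> Rabs (mv d q u l) <= C) ->
  Eh d P f0 h u i <= u i + C * h.
Proof. intros Hh Hi HC. apply Eh0_le; auto. intros q Hq.
  pose proof (mexpv_lip d h q u C i (HQ q Hq) Hh (HC q Hq) Hi). apply Rabs_le_between in H. lra. Qed.

Lemma Eh0_lower h u C i : 0 <= h -> (i < d)%nat ->
  (forall q, P q -> forall l, (l < d)%nat -> Rabs (mv d q u l) <= C) ->
  u i - C * h <= Eh d P f0 h u i.
Proof. intros Hh Hi HC.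
  pose proof (mexpv_lip d h q0 u C i (HQ q0 Hq0) Hh (HC q0 Hq0) Hi). apply Rabs_le_between in H.
  assert (mexpv d h q0 u i <= Eh d P f0 h u i) by (apply T_le_Eh0; auto). lra. Qed.

Lemma Eh0_split a b u i : 0 <= a -> 0 <= b -> (i < d)%nat ->
  Eh d P f0 (a + b) u i <= Eh d P f0 a (Eh d P f0 b u) i.
Proof. intros Ha Hb Hi. apply Eh0_le; auto. lra. intros q Hq.
  rewrite mexpv_semigroup; auto. eapply Rle_trans. apply mexpv_mono; auto.
  intros l Hl. apply (T_le_Eh0 b u l q); auto. apply T_le_Eh0; auto. Qed.
End Eh0S.

Lemma last_default (l : list R) a b : l <> [] -> last l a = last l b.
Proof. induction l; intros H; [congruence|]. destruct l; simpl; auto. apply IHl. discriminate. Qed.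

Lemma last_cons (x : R) r p : last (x :: r) p = last r x.
Proof. destruct r as [|y r']; [reflexivity|]. transitivity (last (y :: r') p). reflexivity.
  apply last_default; discriminate. Qed.

Lemma last_app (l1 l2 : list R) p : last (l1 ++ l2) p = last l2 (last l1 p).
Proof. revert p; induction l1; intros p. reflexivity.
  rewrite <- app_comm_cons, !last_cons. apply IHl1. Qed.

Lemma incr_gt p l y : incr p l -> In y l -> p < y.
Proof. revert p; induction l; simpl; intros p H Hy; [contradiction|]. destruct H as [H1 H2].
  destruct Hy as [->|Hy]; auto. specialize (IHl a H2 Hy). lra. Qed.

Lemma incr_last_ge p l : incr p l -> p <= last l p.
Proof. revert p; induction l; intros p H. simpl; lra. destruct H as [H1 H2].
  rewrite last_cons. specialize (IHl a H2). lra. Qed.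

Lemma incr_le_last p l y : incr p l -> In y l -> y <= last l p.
Proof. revert p; induction l; intros p H Hy; [contradiction|]. destruct H as [H1 H2].
  rewrite last_cons. destruct Hy as [->|Hy]. apply incr_last_ge; auto. apply IHl; auto. Qed.

Lemma incr_app p l1 l2 : incr p (l1 ++ l2) <-> incr p l1 /\ incr (last l1 p) l2.
Proof. revert p; induction l1; intros p. simpl; tauto. rewrite <- app_comm_cons, last_cons. cbn [incr].
  rewrite IHl1. tauto. Qed.

Lemma incr_nil p l : incr p l -> last l p = p -> l = [].
Proof. intros H1 H2. destruct l as [|r l]; auto.
  assert (r <= last (r :: l) p) by (apply incr_le_last; simpl; auto).
  destruct H1. lra. Qed.

Lemma incr_shift p l h : incr p l -> incr (p + h) (map (fun y => y + h) l).
Proof. revert p; induction l; simpl; intros p H; auto. destruct H; split; [lra|]. apply IHl; auto. Qed.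

Lemma last_shift p l h : last (map (fun y => y + h) l) (p + h) = last l p + h.
Proof. revert p; induction l; intros p. reflexivity. cbn [map]. rewrite !last_cons. apply IHl. Qed.

Fixpoint ins (y : R) (l : list R) : list R :=
  match l with
  | [] => [y]
  | x :: r => if Rlt_dec y x then y :: x :: r else if Rlt_dec x y then x :: ins y r else x :: r
  end.

Lemma ins_incr p l y : incr p l -> p < y -> incr p (ins y l).
Proof. revert p; induction l; simpl; intros p H Hy; auto.
  destruct H as [H1 H2]. destruct (Rlt_dec y a); simpl; auto.
  destruct (Rlt_dec a y); simpl; auto. Qed.

Lemma ins_in l y z : In z l -> In z (ins y l).
Proof. induction l; simpl; intros H; [contradiction|].
  destruct (Rlt_dec y a); simpl; auto. destruct (Rlt_dec a y); simpl; auto. tauto. Qed.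

Lemma ins_self l y : In y (ins y l).
Proof. induction l; simpl; auto. destruct (Rlt_dec y a); simpl; auto.
  destruct (Rlt_dec a y); simpl; auto. left; lra. Qed.

Lemma ins_last p l y : incr p l -> p < y -> y <= last l p -> last (ins y l) p = last l p.
Proof. revert p; induction l; intros p H Hy Hl. simpl in Hl; lra. destruct H as [H1 H2]. cbn [ins].
  destruct (Rlt_dec y a). rewrite !last_cons. reflexivity.
  destruct (Rlt_dec a y). rewrite !last_cons. rewrite last_cons in Hl. apply IHl; auto. reflexivity. Qed.

Lemma union_many p b : forall a, incr p a -> (forall y, In y b -> p < y /\ y <= last a p) ->
  exists c, incr p c /\ last c p = last a p /\ (forall y, In y a -> In y c) /\ (forall y, In y b -> In y c).
Proof. induction b as [|z b IHb]; intros a Ha Hb.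
  - exists a; split; auto. split; auto. split; auto. intros y [].
  - destruct (Hb z (or_introl eq_refl)) as [Hb1 Hb2].
    destruct (IHb (ins z a)) as [c [Hc1 [Hc2 [Hc3 Hc4]]]].
    apply ins_incr; auto.
    intros y Hy. rewrite ins_last; auto. apply Hb; simpl; auto.
    exists c. split; auto. split. rewrite Hc2. apply ins_last; auto.
    split. intros; apply Hc3, ins_in; auto.
    intros y [<-|Hy]. apply Hc3, ins_self. auto. Qed.

Lemma union p a b : incr p a -> incr p b -> last a p = last b p ->
  exists c, incr p c /\ last c p = last a p /\ (forall y, In y a -> In y c) /\ (forall y, In y b -> In y c).
Proof. intros Ha Hb Hl. apply union_many; auto. intros y Hy. split. eapply incr_gt; eauto.
  rewrite Hl. apply incr_le_last; auto. Qed.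

Lemma split_at (p : R) (l : list R) x : In x l -> exists l1 l2, l = l1 ++ l2 /\ last l1 p = x.
Proof. intros H. destruct (in_split x l H) as [A [B ->]]. exists (A ++ [x]), B. split.
  rewrite <- app_assoc; auto. apply last_last. Qed.

Section Part.
Variable d : nat.
Variable P : mat -> Prop.
Variable f : mat -> vec.
Variable q0 : mat.
Hypothesis HQ : forall q, P q -> Qmatrix d q.
Hypothesis Hq0 : P q0.
Hypothesis Hfle : forall q, P q -> forall i, (i < d)%nat -> f q i <= 0.

Lemma Epi_aux_lip p l u v c : incr p l -> (forall j, (j < d)%nat -> u j <= v j + c) ->
  forall i, (i < d)%nat -> Epi_aux d P f p l u i <= Epi_aux d P f p l v i + c.
Proof. revert p; induction l; simpl; intros p Hl H i Hi; auto.
  destruct Hl as [H1 H2]. apply (Eh_lip d P f q0); auto. lra. Qed.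

Lemma Epi_aux_mono p l u v : incr p l -> (forall j, (j < d)%nat -> u j <= v j) ->
  forall i, (i < d)%nat -> Epi_aux d P f p l u i <= Epi_aux d P f p l v i.
Proof. intros Hl H i Hi. rewrite <- (Rplus_0_r (Epi_aux d P f p l v i)). apply Epi_aux_lip; auto.
  intros; rewrite Rplus_0_r; auto. Qed.

Lemma Epi_eq l u i : (i < d)%nat -> Epi d P f l u i = Epi_aux d P f 0 l u i.
Proof. intros Hi. destruct l; simpl; auto. apply (Eh_0 d P f q0); auto. Qed.
End Part.

Lemma Epi_aux_app d P f p l1 l2 u :
  Epi_aux d P f p (l1 ++ l2) u = Epi_aux d P f p l1 (Epi_aux d P f (last l1 p) l2 u).
Proof. revert p; induction l1; intros p. reflexivity. rewrite <- app_comm_cons. cbn [Epi_aux].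
  rewrite IHl1, last_cons. reflexivity. Qed.

Lemma Epi_aux_shift d P f p l h u :
  Epi_aux d P f (p + h) (map (fun y => y + h) l) u = Epi_aux d P f p l u.
Proof. revert p; induction l; intros p; simpl; auto. rewrite IHl.
  replace (a + h - (p + h)) with (a - p) by ring. auto. Qed.

Section Sig.
Variable d : nat.
Variable P : mat -> Prop.
Variable q0 : mat.
Hypothesis HQ : forall q, P q -> Qmatrix d q.
Hypothesis Hq0 : P q0.

Notation f0 := (fun (_ : mat) (_ : nat) => 0).
Notation E0 := (Eh d P f0).
Notation EA := (Epi_aux d P f0).

Lemma f0le' : forall q, P q -> forall i, (i < d)%nat -> f0 q i <= 0.
Proof. intros; lra. Qed.

Lemma Epi0_bound p l u C : incr p l ->
  (forall q, P q -> forall l, (l < d)%nat -> Rabs (mv d q u l) <= C) ->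
  forall i, (i < d)%nat -> u i - C * (last l p - p) <= EA p l u i <= u i + C * (last l p - p).
Proof. intros Hl HC. revert p Hl. induction l as [|x r IH]; intros p Hl i Hi.
  - simpl. lra.
  - destruct Hl as [H1 H2]. rewrite last_cons. cbn [Epi_aux].
    specialize (IH x H2).
    split.
    + assert (E0 (x - p) u i <= E0 (x - p) (EA x r u) i + C * (last r x - x)).
      { apply (Eh_lip d P f0 q0); auto; try apply f0le'; try lra. intros j Hj. specialize (IH j Hj). lra. }
      assert (u i - C * (x - p) <= E0 (x - p) u i) by (apply (Eh0_lower d P q0); auto; lra). lra.
    + assert (E0 (x - p) (EA x r u) i <= E0 (x - p) u i + C * (last r x - x)).
      { apply (Eh_lip d P f0 q0); auto; try apply f0le'; try lra. intros j Hj. specialize (IH j Hj). lra. }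
      assert (E0 (x - p) u i <= u i + C * (x - p)) by (apply (Eh0_upper d P q0); auto; lra). lra. Qed.

Lemma coarse_le_fine p l w : incr p l -> forall i, (i < d)%nat -> E0 (last l p - p) w i <= EA p l w i.
Proof. revert p; induction l as [|x r IH]; intros p Hl i Hi.
  - simpl. replace (p - p) with 0 by ring. rewrite (Eh_0 d P f0 q0); auto. lra. apply f0le'.
  - destruct Hl as [H1 H2]. rewrite last_cons. cbn [Epi_aux].
    assert (Hx : x <= last r x) by (apply incr_last_ge; auto).
    replace (last r x - p) with ((x - p) + (last r x - x)) by ring.
    eapply Rle_trans. apply (Eh0_split d P q0); auto; lra.
    apply (Eh_mono d P f0 q0); auto; try apply f0le'; try lra; try (intros j Hj; apply IH; auto). Qed.

Lemma refine p l : forall l', incr p l -> incr p l' -> last l p = last l' p -> (forall y, In y l -> In y l') ->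
  forall u i, (i < d)%nat -> EA p l u i <= EA p l' u i.
Proof. revert p; induction l as [|x r IH]; intros p l' Hl Hl' Hlast Hin u i Hi.
  - simpl in Hlast. symmetry in Hlast. rewrite (incr_nil p l' Hl' Hlast). simpl; lra.
  - destruct (split_at p l' x (Hin x (or_introl eq_refl))) as [l1 [l2 [-> Hx]]].
    rewrite Epi_aux_app, Hx. apply incr_app in Hl'. destruct Hl' as [Hl1 Hl2]. rewrite Hx in Hl2.
    destruct Hl as [H1 H2]. cbn [Epi_aux].
    eapply Rle_trans.
    2: { rewrite <- Hx at 1. apply coarse_le_fine; auto. }
    rewrite Hx. apply (Eh_mono d P f0 q0); auto; try apply f0le'; try lra.
    intros j Hj. apply IH; auto.
    + rewrite last_app, Hx, last_cons in Hlast. auto.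
    + intros y Hy. assert (x < y) by (apply (incr_gt x r y H2 Hy)).
      specialize (Hin y (or_intror Hy)). apply in_app_or in Hin. destruct Hin as [Hin|Hin]; auto.
      assert (y <= last l1 p) by (apply incr_le_last; auto). lra. Qed.

Definition SigSet t v := fun v' => exists l, is_part t l /\ v' = Epi d P f0 l v.

Lemma SigSet_ne t v : 0 <= t -> exists v', SigSet t v v'.
Proof. intros Ht. destruct Ht as [Ht|<-].
  - exists (Epi d P f0 [t] v), [t]. split; auto. split; simpl; auto.
  - exists (Epi d P f0 [] v), []. split; auto. split; simpl; auto. Qed.

Variable v : vec.
Variable C : R.
Hypothesis HC : forall q, P q -> forall l, (l < d)%nat -> Rabs (mv d q v l) <= C.

Lemma SigSet_bd t i : (i < d)%nat -> forall v', SigSet t v v' -> v' i <= v i + C * t.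
Proof. intros Hi v' [l [[Hl1 Hl2] ->]]. rewrite Epi_eq with (q0 := q0); auto; try apply f0le'.
  pose proof (Epi0_bound 0 l v C Hl1 HC i Hi). rewrite Hl2 in H. lra. Qed.

Lemma Sig_ub t l i : (i < d)%nat -> is_part t l -> EA 0 l v i <= Nisio d P f0 t v i.
Proof. intros Hi Hl. unfold Nisio. rewrite <- (Epi_eq d P f0 q0) with (l := l); auto; try apply f0le'.
  apply (vsup_ub _ i (v i + C * t)). apply SigSet_bd; auto. exists l; auto. Qed.

Lemma Sig_le t i B : 0 <= t -> (i < d)%nat -> (forall l, is_part t l -> EA 0 l v i <= B) -> Nisio d P f0 t v i <= B.
Proof. intros Ht Hi HB. unfold Nisio. apply vsup_le. apply SigSet_ne; auto.
  intros v' [l [Hl ->]]. rewrite (Epi_eq d P f0 q0); auto; try apply f0le'. Qed.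

Lemma Sig_0 i : (i < d)%nat -> Nisio d P f0 0 v i = v i.
Proof. intros Hi. apply Rle_antisym.
  - apply Sig_le; auto. lra. intros l [Hl1 Hl2]. rewrite (incr_nil 0 l Hl1 Hl2). simpl; lra.
  - change (v i) with (EA 0 [] v i). apply Sig_ub; auto. split; simpl; auto. Qed.

Lemma Sig_lip_dir s h i : 0 <= s -> 0 <= h -> (i < d)%nat ->
  Rabs (Nisio d P f0 (s + h) v i - Nisio d P f0 s v i) <= C * h.
Proof. intros Hs Hh Hi. apply Rabs_le_between. split.
  -
    assert (Nisio d P f0 s v i <= Nisio d P f0 (s + h) v i + C * h); [|lra].
    apply Sig_le; auto. intros l [Hl1 Hl2].
    destruct Hh as [Hh|<-].
    + assert (Hp : is_part (s + h) (l ++ [s + h])).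
      { split. apply incr_app. split; auto. rewrite Hl2. simpl. split; auto; lra.
        rewrite last_app. reflexivity. }
      eapply Rle_trans. 2: { apply Rplus_le_compat_r. apply (Sig_ub _ _ i Hi Hp). }
      rewrite Epi_aux_app, Hl2. cbn [Epi_aux]. replace (s + h - s) with h by ring.
      apply (Epi_aux_lip d P f0 q0); auto; try apply f0le'.
      intros j Hj. assert (v j - C * h <= E0 h v j) by (apply (Eh0_lower d P q0); auto; lra). lra.
    + rewrite Rplus_0_r, Rmult_0_r, Rplus_0_r. apply Sig_ub; auto. split; auto.
  -
    assert (Nisio d P f0 (s + h) v i <= Nisio d P f0 s v i + C * h); [|lra].
    apply Sig_le; auto. lra. intros l [Hl1 Hl2].
    destruct Hs as [Hs|<-].
    + set (l' := ins s l).
      assert (Hl'1 : incr 0 l') by (apply ins_incr; auto).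
      assert (Hl'2 : last l' 0 = s + h) by (unfold l'; rewrite ins_last; auto; lra).
      eapply Rle_trans. apply (refine 0 l l'); auto. rewrite Hl'2; auto. intros; apply ins_in; auto.
      destruct (split_at 0 l' s (ins_self l s)) as [l1 [l2 [E Hx]]]. rewrite E.
      rewrite E in Hl'1, Hl'2. apply incr_app in Hl'1. destruct Hl'1 as [H1 H2]. rewrite Hx in H2.
      rewrite Epi_aux_app, Hx.
      eapply Rle_trans. 2: { apply Rplus_le_compat_r. apply (Sig_ub s l1 i Hi). split; auto. }
      apply (Epi_aux_lip d P f0 q0); auto; try apply f0le'.
      intros j Hj. pose proof (Epi0_bound s l2 v C H2 HC j Hj).
      rewrite last_app, Hx in Hl'2. rewrite Hl'2 in H. lra.
    + rewrite Sig_0; auto. pose proof (Epi0_bound 0 l v C Hl1 HC i Hi). rewrite Hl2 in H. lra. Qed.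

Lemma Sig_lip s t i : 0 <= s -> 0 <= t -> (i < d)%nat ->
  Rabs (Nisio d P f0 t v i - Nisio d P f0 s v i) <= C * Rabs (t - s).
Proof. intros Hs Ht Hi. destruct (Rle_dec s t).
  - replace t with (s + (t - s)) at 1 by ring. rewrite (Rabs_right (t - s)) by lra.
    apply Sig_lip_dir; auto; lra.
  - rewrite Rabs_minus_sym. replace s with (t + (s - t)) at 1 by ring. rewrite (Rabs_left (t - s)) by lra.
    replace (- (t - s)) with (s - t) by ring. apply Sig_lip_dir; auto; lra. Qed.
End Sig.

Lemma lip_cont (g : R -> R) K : 0 <= K -> (forall x y, Rabs (g x - g y) <= K * Rabs (x - y)) ->
  forall x, continuous g x.
Proof. intros HK H x. apply continuity_pt_filterlim.
  intros eps Heps. exists (eps / (K + 1)). split. apply Rdiv_lt_0_compat; lra.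
  intros y [_ Hy]. simpl in *. unfold R_dist in *.
  eapply Rle_lt_trans. apply H.
  apply Rle_lt_trans with (K * (eps / (K + 1))). apply Rmult_le_compat_l; lra.
  apply Rlt_le_trans with ((K + 1) * (eps / (K + 1))). apply Rmult_lt_compat_r.
  apply Rdiv_lt_0_compat; lra. lra. right; field; lra. Qed.

Lemma RInt_cmul (g : R -> R) a b c : ex_RInt g a b -> RInt (fun s => c * g s) a b = c * RInt g a b.
Proof. intros H. exact (@RInt_scal R_CompleteNormedModule g a b c H). Qed.

Lemma ex_RInt_cmul (g : R -> R) a b c : ex_RInt g a b -> ex_RInt (fun s => c * g s) a b.
Proof. intros H. exact (@ex_RInt_scal R_NormedModule g a b c H). Qed.

Lemma RInt_shift (g : R -> R) h R : ex_RInt g h (h + R) -> RInt (fun y => g (y + h)) 0 R = RInt g h (h + R).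
Proof. intros H. pose proof (@RInt_comp_lin R_CompleteNormedModule g 1 h 0 R) as E.
  replace (1 * 0 + h) with h in E by ring. replace (1 * R + h) with (h + R) in E by ring.
  rewrite <- E by auto. apply RInt_ext. intros x _. unfold scal; simpl; unfold mult; simpl.
  rewrite Rmult_1_l. f_equal. ring. Qed.

Lemma ex_RInt_shift (g : R -> R) h L : ex_RInt g h (h + L) -> ex_RInt (fun y => g (y + h)) 0 L.
Proof. intros H. pose proof (@ex_RInt_comp_lin R_NormedModule g 1 h 0 L) as E.
  replace (1 * 0 + h) with h in E by ring. replace (1 * L + h) with (h + L) in E by ring.
  specialize (E H). apply (ex_RInt_ext (fun y => scal 1 (g (1 * y + h))) (fun y => g (y + h)) 0 L) in E; auto.
  intros x _. unfold scal; simpl; unfold mult; simpl. rewrite Rmult_1_l. f_equal. ring. Qed.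

Section Main.
Variable d : nat.
Variable P : mat -> Prop.
Variable f : mat -> vec.
Variable q0 : mat.
Hypothesis HQ : forall q, P q -> Qmatrix d q.
Hypothesis Hq0 : P q0.
Hypothesis Hfle : forall q, P q -> forall i, (i < d)%nat -> f q i <= 0.

Notation f0 := (fun (_ : mat) (_ : nat) => 0).
Notation E0 := (Eh d P f0).
Notation EA := (Epi_aux d P f0).
Notation Sig := (Nisio d P f0).

Variable w : vec.
Variable C : R.
Hypothesis HC : forall q, P q -> forall l, (l < d)%nat -> Rabs (mv d q w l) <= C.

Lemma Dir q h s i : P q -> 0 <= h -> 0 <= s -> (i < d)%nat ->
  mexpv d h q (fun j => Sig s w j) i <= Sig (h + s) w i.
Proof. intros Hq Hh Hs Hi. apply le_epsilon. intros e He.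
  assert (Hex : forall n, (n <= d)%nat -> exists l, is_part s l /\ forall j, (j < n)%nat -> Sig s w j - e <= EA 0 l w j).
  { induction n; intros Hn.
    - destruct Hs as [Hs|<-]. exists [s]; split. split; simpl; auto. intros; lia.
      exists []; split. split; simpl; auto. intros; lia.
    - destruct IHn as [l [[Hl1 Hl2] Hl3]]. lia.
      destruct (vsup_approx (SigSet d P s w) n (w n + C * s) e (SigSet_ne d P s w Hs)
         (SigSet_bd d P q0 HQ Hq0 w C HC s n ltac:(lia)) He) as [v' [[ln [[Hn1 Hn2] ->]] Hv']].
      rewrite (Epi_eq d P f0 q0 HQ Hq0 (f0le' d P)) in Hv' by lia.
      destruct (union 0 l ln Hl1 Hn1) as [c [Hc1 [Hc2 [Hc3 Hc4]]]]. congruence.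
      exists c. split. split; auto. congruence.
      intros j Hj. destruct (Nat.eq_dec j n) as [->|Hne].
      + eapply Rle_trans. 2: { apply (refine d P q0 HQ Hq0 0 ln c); auto; try lia; try congruence. }
        unfold Nisio. unfold SigSet in Hv'. lra.
      + eapply Rle_trans. apply Hl3; lia. apply (refine d P q0 HQ Hq0 0 l c); auto; try lia; try congruence. }
  destruct (Hex d (le_n d)) as [l [[Hl1 Hl2] Hl3]].
  eapply Rle_trans. apply (mexpv_mono d h q _ (fun j => EA 0 l w j + e)); auto.
  intros j Hj; specialize (Hl3 j Hj); lra.
  rewrite mexpv_shift_c; auto. apply Rplus_le_compat_r.
  eapply Rle_trans. apply (T_le_Eh0 d P HQ); auto.
  destruct Hh as [Hh|<-].
  - assert (Hp : is_part (h + s) (h :: map (fun y => y + h) l)).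
    { assert (Hi1 := incr_shift 0 l h Hl1). assert (Hi2 := last_shift 0 l h). rewrite Rplus_0_l in Hi1, Hi2.
      split. split; auto. rewrite last_cons, Hi2. lra. }
    eapply Rle_trans. 2: { apply (Sig_ub d P q0 HQ Hq0 w C HC (h + s) _ i Hi Hp). }
    cbn [Epi_aux]. rewrite Rminus_0_r.
    assert (Hs2 := Epi_aux_shift d P f0 0 l h w). rewrite Rplus_0_l in Hs2. rewrite Hs2. lra.
  - rewrite Rplus_0_l. rewrite (Eh_0 d P f0 q0); auto; try (intros; lra).
    apply (Sig_ub d P q0 HQ Hq0 w C HC s l i Hi). split; auto. Qed.

Definition SigX (j : nat) (s : R) := Sig (Rmax s 0) w j.

Lemma C_pos : (0 < d)%nat -> 0 <= C.
Proof. intros Hd. eapply Rle_trans. apply Rabs_pos. apply (HC q0 Hq0 0%nat Hd). Qed.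

Lemma SigX_cont j x : (j < d)%nat -> continuous (SigX j) x.
Proof. intros Hj. apply (lip_cont _ C). apply C_pos; lia.
  intros a b. unfold SigX. eapply Rle_trans.
  apply (Sig_lip d P q0 HQ Hq0 w C HC); auto; try apply Rmax_r.
  apply Rmult_le_compat_l. apply C_pos; lia.
  unfold Rmax. destruct (Rle_dec a 0), (Rle_dec b 0); unfold Rabs; repeat destruct Rcase_abs; lra. Qed.

Lemma SigX_ex j a b : (j < d)%nat -> ex_RInt (SigX j) a b.
Proof. intros Hj. apply (@ex_RInt_continuous R_CompleteNormedModule). intros; apply SigX_cont; auto. Qed.

Variable u0 : vec.
Hypothesis Hw : forall q, P q -> forall j, (j < d)%nat -> mv d q u0 j + f q j <= w j.

Lemma step1 h i : 0 <= h -> (i < d)%nat -> Eh d P f h u0 i <= u0 i + RInt (SigX i) 0 h.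
Proof. intros Hh Hi. apply (Eh_le d P f q0); auto. intros q Hq.
  assert (Sq d q (f q) h u0 i - u0 i <= RInt (SigX i) 0 h); [|lra].
  rewrite Sq_RInt; auto. apply RInt_le; auto. apply mexpv_ex_RInt; auto. apply SigX_ex; auto.
  intros s Hs. eapply Rle_trans. apply (mexpv_mono d s q _ w i (HQ q Hq) ltac:(lra) (Hw q Hq) Hi).
  eapply Rle_trans. apply (T_le_Eh0 d P HQ s w i q ltac:(lra) Hi Hq).
  unfold SigX. rewrite Rmax_left by lra.
  replace s with (s - 0) at 1 by ring. change (E0 (s - 0) w i) with (EA 0 [s] w i).
  apply (Sig_ub d P q0 HQ Hq0 w C HC); auto. split; simpl; auto. lra. Qed.

Lemma step2 h R z i : 0 <= h -> 0 <= R -> (i < d)%nat ->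
  (forall j, (j < d)%nat -> z j = RInt (SigX j) 0 R) ->
  E0 h z i <= RInt (SigX i) h (h + R).
Proof. intros Hh HR Hi Hz. apply (Eh0_le d P q0); auto. intros q Hq.
  rewrite mexpv_decomp; auto.
  rewrite (rsum_ext d _ (fun j => RInt (fun s => mexpv d h q (ej j) i * SigX j s) 0 R)).
  2: { intros j Hj. rewrite RInt_cmul by (apply SigX_ex; auto). rewrite Hz; auto. ring. }
  destruct (rsum_RInt d (fun j s => mexpv d h q (ej j) i * SigX j s) 0 R) as [H1 H2].
  { intros j Hj. apply ex_RInt_cmul. apply SigX_ex; auto. }
  cbv beta in H1, H2. rewrite <- H2.
  rewrite <- RInt_shift by (apply SigX_ex; auto).
  apply RInt_le; auto. apply ex_RInt_shift. apply SigX_ex; auto.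
  intros s Hs.
  rewrite (rsum_ext d _ (fun j => SigX j s * mexpv d h q (ej j) i)) by (intros; ring).
  rewrite <- (mexpv_decomp d h q (fun j => SigX j s)); auto.
  unfold SigX. rewrite Rmax_left by lra. rewrite Rmax_left by lra. rewrite Rplus_comm.
  apply Dir; auto; lra. Qed.

Lemma main_ind p l : incr p l -> forall i, (i < d)%nat ->
  Epi_aux d P f p l u0 i <= u0 i + RInt (SigX i) 0 (last l p - p).
Proof. revert p; induction l as [|x r IH]; intros p Hl i Hi.
  - simpl. replace (p - p) with 0 by ring. rewrite RInt_point. unfold zero; simpl. lra.
  - destruct Hl as [H1 H2]. rewrite last_cons. cbn [Epi_aux].
    assert (HR : x <= last r x) by (apply incr_last_ge; auto).
    specialize (IH x H2).
    eapply Rle_trans. apply (Eh_mono d P f q0 HQ Hq0 Hfle (x - p) _ (fun j => u0 j + RInt (SigX j) 0 (last r x - x))).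
    lra. auto. intros j Hj. apply IH; auto.
    eapply Rle_trans. apply (Eh_sub d P q0 HQ Hq0 f); auto. lra.
    eapply Rle_trans. apply Rplus_le_compat. apply step1; auto. lra.
    apply (step2 (x - p) (last r x - x)); auto; try lra; try (intros; reflexivity).
    replace (last r x - p) with ((x - p) + (last r x - x)) by ring.
    rewrite <- (RInt_Chasles (SigX i) 0 (x - p) (x - p + (last r x - x))); try apply SigX_ex; auto.
    unfold plus; simpl. lra. Qed.

Lemma part2 t i : 0 <= t -> (i < d)%nat -> Nisio d P f t u0 i <= u0 i + RInt (SigX i) 0 t.
Proof. intros Ht Hi. unfold Nisio. apply vsup_le.
  - destruct Ht as [Ht|<-]. exists (Epi d P f [t] u0), [t]. split; auto. split; simpl; auto.
    exists (Epi d P f [] u0), []. split; auto. split; simpl; auto.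
  - intros v' [l [[Hl1 Hl2] ->]]. rewrite (Epi_eq d P f q0); auto.
    pose proof (main_ind 0 l Hl1 i Hi). rewrite Hl2, Rminus_0_r in H. auto. Qed.
End Main.

Lemma fin_bound n (Q : nat -> R -> Prop) : (forall l, (l < n)%nat -> exists C, Q l C) ->
  (forall l C C', Q l C -> C <= C' -> Q l C') -> exists C, forall l, (l < n)%nat -> Q l C.
Proof. intros H Hm. induction n.
  - exists 0; intros; lia.
  - destruct IHn as [C1 HC1]. intros; apply H; lia.
    destruct (H n (Nat.lt_succ_diag_r n)) as [C2 HC2].
    exists (Rmax C1 C2). intros l Hl. destruct (Nat.eq_dec l n) as [->|Hne].
    apply (Hm n C2); auto. apply Rmax_r. apply (Hm l C1); auto. apply HC1; lia. apply Rmax_l. Qed.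

Theorem mainTheorem10 (d : nat) (P : mat -> Prop) (f : mat -> vec) (q0 : mat)
  (HQ : forall q, P q -> Qmatrix d q)
  (Hq0 : P q0)
  (Hf0 : forall i, (i < d)%nat -> f q0 i = 0)
  (Hfle : forall q, P q -> forall i, (i < d)%nat -> f q i <= 0)
  (Hfin : forall (u : vec) i, (i < d)%nat ->
            exists M, forall q, P q -> mv d q u i + f q i <= M)
  (Hbdd : exists C, forall q, P q -> forall i, (i < d)%nat -> Rabs (f q i) <= C) :
  (forall (v : vec) i, (i < d)%nat -> forall s, 0 <= s ->
     limit1_in (fun s' => Nisio d P (fun _ _ => 0) s' v i) (fun x => 0 <= x)
               (Nisio d P (fun _ _ => 0) s v i) s)
  /\
  (forall (u0 : vec) t, 0 <= t -> forall i, (i < d)%nat ->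
     exists pr : Riemann_integrable
                   (fun s => Nisio d P (fun _ _ => 0) s (Qop d P f u0) i) 0 t,
       Nisio d P f t u0 i - u0 i <= RiemannInt pr).
Proof.
  destruct Hbdd as [Cf HCf].
  assert (Hbd : forall u, exists C, forall q, P q -> forall l, (l < d)%nat -> Rabs (mv d q u l) <= C).
  { intros u. destruct (fin_bound d (fun l C => forall q, P q -> Rabs (mv d q u l) <= C)) as [C HC].
    - intros l Hl. destruct (Hfin u l Hl) as [M1 H1]. destruct (Hfin (fun j => -1 * u j + 0 * u j) l Hl) as [M2 H2].
      exists (Rmax (M1 + Cf) (M2 + Cf)). intros q Hq. specialize (H1 q Hq). specialize (H2 q Hq).
      rewrite mv_lin in H2. pose proof (HCf q Hq l Hl). apply Rabs_le_between in H.
      apply Rabs_le. split.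
      + assert (- mv d q u l <= M2 + Cf) by lra. pose proof (Rmax_r (M1 + Cf) (M2 + Cf)). lra.
      + pose proof (Rmax_l (M1 + Cf) (M2 + Cf)). lra.
    - intros l C C' H1 H2 q Hq. eapply Rle_trans; eauto.
    - exists C. intros q Hq l Hl. apply HC; auto. }
  split.
  - intros v i Hi s Hs. destruct (Hbd v) as [C HC].
    assert (HC0 : 0 <= C) by (eapply Rle_trans; [apply Rabs_pos| apply (HC q0 Hq0 i Hi)]).
    intros eps Heps. exists (eps / (C + 1)). split. apply Rdiv_lt_0_compat; lra.
    intros x [Hx Hxs]. simpl in *. unfold R_dist in *.
    eapply Rle_lt_trans. apply (Sig_lip d P q0 HQ Hq0 v C HC s x i); auto.
    apply Rle_lt_trans with (C * (eps / (C + 1))). apply Rmult_le_compat_l; lra.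
    apply Rlt_le_trans with ((C + 1) * (eps / (C + 1))). apply Rmult_lt_compat_r.
    apply Rdiv_lt_0_compat; lra. lra. right; field; lra.
  - intros u0 t Ht i Hi.
    set (w := Qop d P f u0).
    destruct (Hbd w) as [C HC].
    assert (Hw : forall q, P q -> forall j, (j < d)%nat -> mv d q u0 j + f q j <= w j).
    { intros q Hq j Hj. destruct (Hfin u0 j Hj) as [M HM]. unfold w, Qop.
      apply (vsup_ub _ j M (fun i => mv d q u0 i + f q i)).
      intros v' [q' [Hq' ->]]. auto. exists q; auto. }
    assert (Hex : ex_RInt (fun s => Nisio d P (fun _ _ => 0) s w i) 0 t).
    { apply (ex_RInt_ext (SigX d P w i)). intros x Hx. unfold SigX. rewrite Rmax_left; auto.
      rewrite Rmin_left in Hx by auto. lra. apply (SigX_ex d P q0 HQ Hq0 w C HC); auto. }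
    exists (ex_RInt_Reals_0 _ _ _ Hex).
    rewrite <- RInt_Reals.
    rewrite (RInt_ext _ (SigX d P w i)).
    pose proof (part2 d P f q0 HQ Hq0 Hfle w C HC u0 Hw t i Ht Hi). lra.
    intros x Hx. unfold SigX. rewrite Rmax_left; auto. rewrite Rmin_left in Hx by auto. lra.
Qed.
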